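(* Let $D$ be a positive integer and $G$ a connected graph of maximum degree at most $D$. Then for every set $S$ of $n$ vertices of $G$, there exist at least $\lceil (n-1)/D\rceil$ pairwise vertex-disjoint paths in $G$, each having two distinct endpoints, both of which belong to $S$. *)

(* Defs.v *)
From mathcomp Require Import all_boot.
Set Implicit Arguments. Unset Strict Implicit. Unset Printing Implicit Defensive.

Section Graphs.
Variable T : finType.

Definition simple_graph (e : rel T) : Prop := symmetric e /\ irreflexive e.

Definition neighbours (e : rel T) (v : T) : {set T} := [set u | e v u].
Definition max_degree_le (e : rel T) (D : nat) : Prop :=
  forall v : T, #|neighbours e v| <= D.

Definition connected_graph (e : rel T) : Prop := forall x y : T, connect e x y.

Definition S_path (e : rel T) (S : {set T}) (p : seq T) : bool :=
  if p is x :: s then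
    [&& path e x s, uniq p, x != last x s, x \in S & last x s \in S]
  else false.

Definition disjoint_S_paths (e : rel T) (S : {set T}) (P : seq (seq T)) : bool :=
  all (S_path e S) P && pairwise (fun p q : seq T => [disjoint p & q]) P.
End Graphs.

(* ceiling of a / b for b > 0 (natural numbers) *)
Definition ceil_div (a b : nat) : nat := (a + b.-1) %/ b.

(* Main.v *)
Require Import Defs.
From mathcomp Require Import all_boot zify.
Set Implicit Arguments. Unset Strict Implicit. Unset Printing Implicit Defensive.

Lemma ceil_step a b D : 0 < D -> a <= D + b -> ceil_div a D <= (ceil_div b D).+1.
Proof.
move=> D0 h; rewrite /ceil_div.
apply: (leq_trans (leq_div2r D (_ : a + D.-1 <= (b + D.-1) + 1 * D))).
  by rewrite mul1n addnAC leq_add2r addnC.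
by rewrite divnDMl // addn1.
Qed.

Lemma tree_exists (T : finType) (e : rel T) (r : T) :
  simple_graph e -> connected_graph e ->
  exists (p : T -> T) (h : T -> nat), p r = r /\
    forall x, x != r -> e x (p x) /\ h (p x) < h x.
Proof.
move=> [esym eirr] conn.
pose fix R k : {set T} := if k is k'.+1 then R k' :|: [set y | [exists x in R k', e x y]] else [set r].
have Rmono k m : k <= m -> R k \subset R m.
  elim: m => [|m IH]; first by rewrite leqn0 => /eqP->.
  rewrite leq_eqVlt => /orP[/eqP->//|/IH Hk].
  by apply: (subset_trans Hk); rewrite /= subsetUl.
have Hex x : exists k, x \in R k.
  have /connectP[s Hs ->] := conn r x.
  exists (size s); elim/last_ind: s Hs => [|s z IH]; first by rewrite /= inE.
  rewrite rcons_path => /andP[/IH Hl He].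
  rewrite size_rcons last_rcons /= inE; apply/orP; right; rewrite inE.
  by apply/existsP; exists (last r s); rewrite Hl.
pose h x := ex_minn (Hex x).
pose p x := if x == r then r else
  if [pick y | (y \in R (h x).-1) && e y x] is Some y then y else r.
exists p, h; split; first by rewrite /p eqxx.
move=> x xr; rewrite /p (negbTE xr).
have hx : x \in R (h x) by rewrite /h; case: ex_minnP.
have hmin : forall k, x \in R k -> h x <= k by rewrite /h; case: ex_minnP.
case Eh: (h x) hx hmin => [|m] hx hmin.
  by move: hx; rewrite /= inE (negbTE xr).
have xm : x \notin R m by apply/negP => /hmin; rewrite ltnn.
move: hx; rewrite /= inE (negbTE xm) /= inE => /existsP[y /andP[yR eyx]].
case: pickP => [z /andP[zR ezx]|/(_ y)]; last by rewrite yR eyx.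
split; first by rewrite esym.
have hz : z \in R (h z) by rewrite /h; case: ex_minnP.
by rewrite ltnS /h; case: ex_minnP => n _ /(_ m zR).
Qed.

Lemma arith (sW sA sW' c N D : nat) (b : bool) :
  sW = sA + sW' -> sA <= 1 + c -> c + b <= N -> N <= D -> (b = false -> sW' = 0) ->
  sW - 1 <= D + (sW' - 1).
Proof. case: b => /= H1 H2 H3 H4 H5; last rewrite H5 // in H1 *; lia. Qed.

Lemma main_ind (T : finType) (e : rel T) (D : nat) (S : {set T}) (r : T)
  (p : T -> T) (h : T -> nat) :
  0 < D -> symmetric e -> max_degree_le e D -> p r = r ->
  (forall x, x != r -> e x (p x) /\ h (p x) < h x) ->
  forall n (W : {set T}), #|W| <= n -> (forall x, x \in W -> p x \in W) ->
  exists P : seq (seq T), disjoint_S_paths e S P /\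
    all (fun q => all (fun x => x \in W) q) P /\
    ceil_div (#|S :&: W| - 1) D <= size P.
Proof.
move=> D0 esym deg pr Hp.
have pfix x : p x = x -> x = r.
  move=> px; apply/eqP; apply/negPn/negP => /Hp[_]; by rewrite px ltnn.
have proot y : fconnect p y r.
  elim: {y}(h y) {-2}y (leqnn (h y)) => [|k IH] y hy.
    case: (eqVneq y r) => [->|/Hp[_]]; first exact: connect0.
    by rewrite ltnNge (leq_trans hy).
  case: (eqVneq y r) => [->|/Hp[_ hl]]; first exact: connect0.
  apply: connect_trans (fconnect1 p y) (IH _ _).
  by rewrite -ltnS (leq_trans hl hy).
elim=> [|n IH] W.
  rewrite leqn0 cards_eq0 => /eqP -> _; exists [::]; split => //.
  by rewrite setI0 cards0 /ceil_div add0n divn_small // prednK.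
move=> Wn Wcl.
have iterW k y : y \in W -> iter k p y \in W.
  by move=> yW; elim: k => //= k IHk; apply: Wcl.
case: (leqP #|S :&: W| 1) => [sW1|sW2].
  exists [::]; split => //; split => //.
  have -> : #|S :&: W| - 1 = 0 by lia.
  by rewrite /ceil_div add0n divn_small // prednK.
pose Sub v := [set y in W | fconnect p y v].
have SubW v : Sub v \subset W by apply/subsetP => y; rewrite inE => /andP[].
have Subr : Sub r = W by apply/setP => y; rewrite inE proot andbT.
pose Pr v := 1 < #|S :&: Sub v|.
have Pr_r : Pr r by rewrite /Pr Subr.
case: (arg_maxnP h Pr_r) => v Pv Hmax.
set A := Sub v.
have [a [b [aA bA ab]]] : exists a b, [/\ a \in S :&: A, b \in S :&: A & a != b].
  exact/card_gt1P.
have vW : v \in W.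
  move: aA; rewrite !inE => /and3P[_ aW /iter_findex <-]; exact: iterW.
have vA : v \in A by rewrite inE vW connect0.
pose W' := W :\: A.
have W'n : #|W'| <= n.
  have : W' \subset W :\ v.
    apply/subsetP => x; rewrite !inE => /andP[xA ->]; rewrite andbT.
    by apply/eqP => xv; move: xA; rewrite xv vW connect0.
  move/subset_leq_card; move: Wn; rewrite (cardsD1 v W) vW; lia.
have W'cl x : x \in W' -> p x \in W'.
  rewrite !inE => /andP[/negP xA xW]; rewrite Wcl // andbT; apply/negP => /andP[_ pc].
  by apply: xA; rewrite xW (connect_trans (fconnect1 p x) pc).
have [P' [P'd [P'W P'c]]] := IH W' W'n W'cl.
pose eA := [rel x y | [&& x \in A, y \in A & e x y]].
have eAsym : symmetric eA.
  by move=> x y; rewrite /eA /= esym andbCA andbA.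
have chain k y : y \in W -> iter k p y = v -> connect eA y v.
  elim: k y => [|k IHk] y yW; first by move=> /= ->; exact: connect0.
  rewrite iterSr => itv.
  case: (eqVneq y r) => [yr|/Hp[eyp _]].
    by apply: IHk => //; move: itv; rewrite yr pr.
  apply: connect_trans (connect1 _) (IHk _ (Wcl _ yW) itv).
  rewrite /eA /= eyp !inE yW Wcl //= andbT.
  rewrite -itv (connect_trans (fconnect1 p y) (fconnect_iter _ _ _)) /=.
  exact: fconnect_iter.
have toV y : y \in A -> connect eA y v.
  rewrite inE => /andP[yW /iter_findex]; exact: chain.
have conab : connect eA a b.
  apply: connect_trans (toV _ _) _; first by move: aA; rewrite inE => /andP[].
  rewrite (sym_connect_sym eAsym); apply: toV; by move: bA; rewrite inE => /andP[].
have pathA x s : x \in A -> path eA x s -> all (fun y => y \in A) (x :: s).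
  elim: s x => [|y s IHs] x xA /=; first by rewrite xA.
  by case/andP => /and3P[_ yA _] ps; rewrite xA; apply: IHs.
have [q [qS qA]] : exists q, S_path e S q /\ all (fun y => y \in A) q.
  case/connectP: conab => s ps bl.
  move: aA bA ab; rewrite bl => aA bA ab.
  case/shortenP: ps aA bA ab => s' ps' us' _ aA bA ab.
  exists (a :: s'); split; last first.
    by apply: pathA ps'; move: aA; rewrite inE => /andP[].
  rewrite /S_path us' ab.
  move: aA bA; rewrite !inE => /andP[-> _] /andP[-> _]; rewrite !andbT.
  by apply: sub_path ps' => x y /and3P[].
exists (q :: P'); split; [|split].
- rewrite /disjoint_S_paths /= qS.
  case/andP: P'd => -> ->; rewrite /= andbT.
  apply/allP => q' q'P; apply/pred0P => x /=; apply/negbTE/negP => /andP[xq xq'].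
  have /allP/(_ _ xq) := qA.
  have /allP/(_ _ q'P)/allP/(_ _ xq') := P'W.
  by rewrite inE => /andP[/negP].
- rewrite /=; apply/andP; split.
    apply/allP => x /(allP qA); exact: (subsetP (SubW v)).
  apply/allP => q' /(allP P'W) /allP q'W; apply/allP => x /q'W.
  by rewrite inE => /andP[].
- have e1 : #|S :&: W| = #|S :&: A| + #|S :&: W'|.
    rewrite -(cardsID A (S :&: W)); congr (_ + _); apply: eq_card => x; rewrite !inE.
      by case: (x \in S); case: (x \in W).
    by case: (x \in S); case: (x \in W); case: (fconnect p x v).
  pose C := [set c in W | (p c == v) && (c != v)].
  have Cr c : c \in C -> c != r.
    rewrite inE => /and3P[_ /eqP pc cv]; apply/eqP => cr.
    by move: cv; rewrite -pc cr pr eqxx.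
  have Ch c : c \in C -> h v < h c.
    move=> cC; have [_] := Hp _ (Cr _ cC).
    by move: cC; rewrite inE => /and3P[_ /eqP -> _].
  have e2 : #|S :&: A| <= 1 + #|C|.
    rewrite (cardsD1 v (S :&: A)); apply: leq_add; first exact: leq_b1.
    pose g y := iter (findex p y v).-1 p y.
    have gP y : y \in (S :&: A) :\ v ->
        [/\ g y \in C, y \in S, y \in W & fconnect p y (g y)].
      rewrite !inE => /and4P[yv yS yW ycv].
      have itv := iter_findex ycv.
      have fmax := findex_max ycv.
      rewrite /g; case En: (findex p y v) itv fmax => [|m] itv fmax.
        by move: yv; rewrite -itv eqxx.
      split => //; last exact: fconnect_iter.
      rewrite /= iterW //= -iterS itv eqxx /=.
      apply/eqP => itm.
      have := findex_iter (ltnW fmax); rewrite itm En => H.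
      by move: (ltnSn m); rewrite -{1}H ltnn.
    rewrite -(@card_in_imset _ _ g).
      apply: subset_leq_card; apply/subsetP => x /imsetP[y /gP[gC _ _ _] ->] //.
    move=> y1 y2 /gP[g1C y1S y1W f1] /gP[_ y2S y2W f2] g12.
    have nP : ~~ Pr (g y1).
      by apply/negP => /Hmax H; move: H; rewrite /geq /= leqNgt Ch.
    move: nP; rewrite /Pr -leqNgt => /card_le1_eqP; apply.
      by rewrite !inE y2S y2W g12.
    by rewrite !inE y1S y1W.
  have Cn c : c \in C -> e v c.
    move=> cC; have [ecp _] := Hp c (Cr c cC).
    by move: cC ecp; rewrite inE => /and3P[_ /eqP -> _]; rewrite esym.
  have e3 : #|C| + (v != r) <= #|neighbours e v|.
    case: (eqVneq v r) => [vr|vr] /=.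
      rewrite addn0; apply: subset_leq_card; apply/subsetP => c cC.
      by rewrite inE Cn.
    have [evp hvp] := Hp v vr.
    rewrite [#|neighbours e v|](cardsD1 (p v)) inE evp addnC leq_add2l.
    apply: subset_leq_card; apply/subsetP => c cC.
    rewrite !inE Cn // andbT; apply/eqP => cpv.
    by move: (Ch c cC); rewrite cpv => /(ltn_trans hvp); rewrite ltnn.
  have e4 : v = r -> #|S :&: W'| = 0.
    move=> vr; apply/eqP; rewrite cards_eq0; apply/eqP/setP => x; rewrite !inE vr proot.
    by rewrite andbT; case: (x \in W); rewrite ?andbF.
  have dv := deg v.
  apply: (leq_trans (@ceil_step (#|S :&: W| - 1) (#|S :&: W'| - 1) D D0 _)); last by rewrite /= ltnS.
  apply: (arith e1 e2 e3 dv) => /negbFE/eqP; exact: e4.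
Qed.

Theorem lemma6p3 (T : finType) (e : rel T) (D : nat) (S : {set T}) :
  0 < D -> simple_graph e -> connected_graph e -> max_degree_le e D ->
  exists P : seq (seq T),
    disjoint_S_paths e S P /\ ceil_div (#|S| - 1) D <= size P.
Proof.
move=> D0 sg conn deg.
case: (leqP #|S| 1) => [S1|S2].
  exists [::]; split => //.
  have -> : #|S| - 1 = 0 by lia.
  by rewrite /ceil_div add0n divn_small // prednK.
have [r _] : exists r, r \in S by apply/set0Pn; rewrite -card_gt0; apply: ltnW.
have [p [h [pr Hp]]] := tree_exists r sg conn.
have [P [Pd [_ Pc]]] := @main_ind T e D S r p h D0 sg.1 deg pr Hp _ [set: T] (leqnn _) (fun x _ => in_setT (p x)).
by exists P; split => //; rewrite setIT in Pc.
Qed.
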